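(* In every standard NML model, for names $\mathsf a,\mathsf b{:}\alpha$ and patterns $\phi,\psi,\phi_i$: (1) $\text{И}\mathsf a.\phi\wedge\text{И}\mathsf a.\psi\iff\text{И}\mathsf a.(\phi\wedge\psi)$; in particular $\text{И}\mathsf a.(\phi\wedge\psi)\iff(\text{И}\mathsf a.\phi)\wedge\psi$ if $\mathsf a$ is not free in $\psi$; likewise $\text{И}\mathsf a.\phi\vee\text{И}\mathsf a.\psi\iff\text{И}\mathsf a.(\phi\vee\psi)$. (2) $\neg\,\text{И}\mathsf a.\phi\iff\text{И}\mathsf a.\neg\phi$. (3) For distinct names $\mathsf a,\mathsf b$: $[\mathsf a](\text{И}\mathsf b.\phi)\iff\text{И}\mathsf b.[\mathsf a]\phi$. (4) $\langle\text{И}\mathsf a.\phi,\psi\rangle\iff\text{И}\mathsf a.\langle\phi,\psi\rangle$ if $\mathsf a$ does not occur free in $\psi$. More generally, if $\sigma$ is a symbol such that for all elements $v_1,\dots,v_n$, all $w\in\sigma_M(v_1,\dots,v_n)$ and every atom $a$, $a\notin supp(w)$ implies $a\notin supp(v_i)$ for all $i$, then $\sigma(\text{И}\mathsf a.\phi_1,\dots,\text{И}\mathsf a.\phi_n)\iff\text{И}\mathsf a.\sigma(\phi_1,\dots,\phi_n)$.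
   Context: NML patterns: $\phi::= x \mid \mathsf a \mid \phi\wedge\psi\mid\neg\phi\mid\exists x.\phi\mid\sigma(\phi_1,\dots,\phi_n)\mid \text{И}\mathsf a{:}\alpha.\phi$ (names a separate syntactic class, И binds names); $\vee$ is defined from $\wedge,\neg$; $\langle-,-\rangle$ is the pairing symbol of product sorts; $[\mathsf a]\phi$ is the abstraction symbol. NML models: atoms $\mathbb A=\bigcup_\alpha\mathbb A_\alpha$, $G$ the sort-respecting permutations; carriers are nonempty nominal $G$-sets; symbols are equivariant maps $\sigma_M$ into sets. Standard models interpret name sorts as $\mathbb A_\alpha$, $Pred$ as $\{\star\}$, $[\alpha]\tau$ as the nominal abstraction set $[\mathbb A_\alpha]M_\tau$ (pairs modulo $\alpha$-equivalence), abstraction as the quotient map, pairing canonically, and swapping/concretion/freshness canonically. Valuations: finite-domain, sort-respecting, finitely supported, injective on names. Semantics: $[\![x]\!]_\rho=\{\rho(x)\}$, $[\![\mathsf a]\!]_\rho=\{\rho(\mathsf a)\}$, $[\![\sigma(\vec\phi)]\!]_\rho=\bigcup\{\sigma_M(\vec v)\mid v_i\in[\![\phi_i]\!]_\rho\}$, $\wedge$ intersection, $\neg$ complement, $\exists$ union over values, $[\![\text{И}\mathsf a{:}\alpha.\phi]\!]_\rho=\bigcup_{a\in\mathbb A_\alpha\setminus supp(\rho)}\{v\in[\![\phi]\!]_{\rho[a/\mathsf a]}\mid a\notin supp(v)\}$. $\phi\iff\psi$ means equal denotations under every suitable valuation. *)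

(* Defs.v *)
From Stdlib Require Import List Classical ClassicalEpsilon Arith.
Import ListNotations.



Definition dec (P : Prop) : bool :=
  if excluded_middle_informative P then true else false.

Lemma decP (P : Prop) : dec P = true <-> P.
Proof. unfold dec; destruct (excluded_middle_informative P); intuition discriminate. Qed.

Section NML.

Context (NS : Type).

(* atoms: A = \bigcup_alpha A_alpha, with A_alpha = {alpha} x nat (countably infinite) *)
Definition atom : Type := (NS * nat)%type.
Definition asort (a : atom) : NS := fst a.

Record perm := {
  pf : atom -> atom;
  pinv : atom -> atom;
  pinvK : forall a, pinv (pf a) = a;
  pfK : forall a, pf (pinv a) = a;
  psort : forall a, asort (pf a) = asort a;
  pfinite : exists L : list atom, forall a, pf a <> a -> In a L }.

Definition swapf (a b c : atom) : atom :=
  if dec (c = a) then b else if dec (c = b) then a else c.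

Lemma dec_true {P : Prop} : P -> dec P = true.
Proof. intro H; apply decP; exact H. Qed.
Lemma dec_false {P : Prop} : ~ P -> dec P = false.
Proof. intro H; unfold dec; destruct (excluded_middle_informative P); [contradiction | reflexivity]. Qed.

Lemma swapfK a b c : swapf a b (swapf a b c) = c.
Proof.
  unfold swapf.
  destruct (classic (c = a)) as [E1|E1].
  - rewrite (dec_true E1); subst.
    destruct (classic (b = a)) as [E2|E2].
    + rewrite (dec_true E2); auto.
    + rewrite (dec_false E2), (dec_true (eq_refl b)); auto.
  - rewrite (dec_false E1).
    destruct (classic (c = b)) as [E2|E2].
    + rewrite (dec_true E2), (dec_true (eq_refl a)); auto.
    + rewrite (dec_false E2), (dec_false E1), (dec_false E2); auto.
Qed.

Lemma swapf_sort a b (H : asort a = asort b) c : asort (swapf a b (c)) = asort c.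
Proof.
  unfold swapf.
  destruct (classic (c = a)) as [E1|E1]; [rewrite (dec_true E1); subst; auto|].
  rewrite (dec_false E1).
  destruct (classic (c = b)) as [E2|E2]; [rewrite (dec_true E2); subst; auto|].
  rewrite (dec_false E2); auto.
Qed.

Lemma swapf_fin a b : exists L : list atom, forall c, swapf a b c <> c -> In c L.
Proof.
  exists [a; b]; intros c Hc; unfold swapf in Hc.
  destruct (classic (c = a)) as [E1|E1]; [subst; simpl; auto|].
  destruct (classic (c = b)) as [E2|E2]; [subst; simpl; auto|].
  rewrite (dec_false E1), (dec_false E2) in Hc; congruence.
Qed.

Definition pswap (a b : atom) (H : asort a = asort b) : perm :=
  {| pf := swapf a b; pinv := swapf a b;
     pinvK := swapfK a b; pfK := swapfK a b;
     psort := swapf_sort a b H; pfinite := swapf_fin a b |}.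

Arguments pswap {a b}.

Definition supports (T : Type) (act : perm -> T -> T) (L : list atom) (x : T) : Prop :=
  forall p : perm, (forall a, In a L -> pf p a = a) -> act p x = x.

Arguments supports {T}.

(* a \in supp(x): the least finite support = intersection of all finite supports *)
Definition in_supp (T : Type) (act : perm -> T -> T) (a : atom) (x : T) : Prop :=
  forall L, supports act L x -> In a L.

Arguments in_supp {T}.

Record nomset := {
  ncar :> Type;
  nact : perm -> ncar -> ncar;
  nact_id : forall p x, (forall a, pf p a = a) -> nact p x = x;
  nact_comp : forall p q r x, (forall a, pf r a = pf p (pf q a)) ->
                nact r x = nact p (nact q x);
  nfin : forall x, exists L, supports nact L x;
  ninh : inhabited ncar }.
Arguments nact : clear implicits.

Context (BS : Type).

Inductive sort :=
| SName (al : NS)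
| SBase (b : BS)
| SPred
| SAbs (al : NS) (t : sort)
| SProd (t1 t2 : sort).

Record carrier := { cT : Type; cact : perm -> cT -> cT }.
Arguments cact : clear implicits.

(* nominal abstraction [A_alpha]C: alpha-equivalence classes of pairs *)
Definition alpha_class (C : carrier) (a : atom) (x : cT C) : atom * cT C -> Prop :=
  fun bz => (fst bz = a /\ snd bz = x) \/
            (exists H : asort (fst bz) = asort a,
                ~ in_supp (cact C) (fst bz) x /\ snd bz = cact C (pswap H) x).

Arguments alpha_class : clear implicits.

Definition absT (al : NS) (C : carrier) : Type :=
  { S : atom * cT C -> Prop | exists a x, asort a = al /\ S = alpha_class C a x }.

Definition abs_mk (al : NS) (C : carrier) (a : atom) (Ha : asort a = al) (x : cT C)
  : absT al C :=
  exist _ (alpha_class C a x) (ex_intro _ a (ex_intro _ x (conj Ha eq_refl))).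

Arguments abs_mk : clear implicits.

Definition abs_act (al : NS) (C : carrier) (p : perm) (S : absT al C) : absT al C :=
  let (a, Ha) := constructive_indefinite_description _ (proj2_sig S) in
  let (x, Hx) := constructive_indefinite_description _ Ha in
  abs_mk al C (pf p a) (eq_trans (psort p a) (proj1 Hx)) (cact C p x).

Definition abs_carrier (al : NS) (C : carrier) : carrier :=
  {| cT := absT al C; cact := @abs_act al C |}.

Definition name_act (al : NS) (p : perm) (a : {a : atom | asort a = al})
  : {a : atom | asort a = al} :=
  exist _ (pf p (proj1_sig a)) (eq_trans (psort p _) (proj2_sig a)).

Fixpoint carr (B : BS -> nomset) (s : sort) : carrier :=
  match s with
  | SName al => {| cT := {a : atom | asort a = al}; cact := @name_act al |}
  | SBase b => {| cT := ncar (B b); cact := nact (B b) |}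
  | SPred => {| cT := unit; cact := fun _ u => u |}
  | SAbs al t => abs_carrier al (carr B t)
  | SProd t1 t2 =>
      {| cT := (cT (carr B t1) * cT (carr B t2))%type;
         cact := fun p x => (cact _ p (fst x), cact _ p (snd x)) |}
  end.

Definition M (B : BS -> nomset) (s : sort) : Type := cT (carr B s).
Definition mact (B : BS -> nomset) (s : sort) : perm -> M B s -> M B s := cact (carr B s).

Fixpoint tup (B : BS -> nomset) (l : list sort) : Type :=
  match l with
  | [] => unit
  | s :: l => (M B s * tup B l)%type
  end.

Fixpoint tact (B : BS -> nomset) (l : list sort) (p : perm) : tup B l -> tup B l :=
  match l return tup B l -> tup B l with
  | [] => fun u => u
  | s :: l => fun vs => (mact B s p (fst vs), tact B l p (snd vs))
  end.

Context (Sym : Type) (arity : Sym -> list sort) (res : Sym -> sort).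

Inductive symbol :=
| UserSym (f : Sym)
| SymPair (t1 t2 : sort)
| SymAbs (al : NS) (t : sort)
| SymSwap (al : NS) (t : sort)
| SymConc (al : NS) (t : sort)
| SymFresh (al : NS) (t : sort).

Definition sym_arity (sg : symbol) : list sort :=
  match sg with
  | UserSym f => arity f
  | SymPair t1 t2 => [t1; t2]
  | SymAbs al t => [SName al; t]
  | SymSwap al t => [SName al; SName al; t]
  | SymConc al t => [SAbs al t; SName al]
  | SymFresh al t => [SName al; t]
  end.

Definition sym_res (sg : symbol) : sort :=
  match sg with
  | UserSym f => res f
  | SymPair t1 t2 => SProd t1 t2
  | SymAbs al t => SAbs al t
  | SymSwap al t => t
  | SymConc al t => t
  | SymFresh al t => SPred
  end.

Record std_model := {
  base : BS -> nomset;
  usym : forall f : Sym, tup base (arity f) -> M base (res f) -> Prop;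
  usym_equiv : forall f p vs w,
      usym f (tact base (arity f) p vs) (mact base (res f) p w) <-> usym f vs w }.

Definition sort_eq2 (al : NS) (a b : {a : atom | asort a = al}) :
  asort (proj1_sig a) = asort (proj1_sig b) :=
  eq_trans (proj2_sig a) (eq_sym (proj2_sig b)).

Definition sym_int (Mo : std_model) (sg : symbol) :
  tup (base Mo) (sym_arity sg) -> M (base Mo) (sym_res sg) -> Prop :=
  match sg return tup (base Mo) (sym_arity sg) -> M (base Mo) (sym_res sg) -> Prop with
  | UserSym f => usym Mo f
  | SymPair t1 t2 => fun vs w => w = (fst vs, fst (snd vs))
  | SymAbs al t => fun vs w =>
      w = abs_mk al (carr (base Mo) t) (proj1_sig (fst vs)) (proj2_sig (fst vs)) (fst (snd vs))
  | SymSwap al t => fun vs w =>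
      w = mact (base Mo) t (pswap (sort_eq2 al (fst vs) (fst (snd vs)))) (fst (snd (snd vs)))
  | SymConc al t => fun vs w => proj1_sig (fst vs) (proj1_sig (fst (snd vs)), w)
  | SymFresh al t => fun vs _ =>
      ~ in_supp (mact (base Mo) t) (proj1_sig (fst vs)) (fst (snd vs))
  end.

Inductive pat : sort -> Type :=
| PVar (s : sort) (n : nat) : pat s
| PName (al : NS) (n : nat) : pat (SName al)
| PAnd (s : sort) : pat s -> pat s -> pat s
| PNot (s : sort) : pat s -> pat s
| PEx (s : sort) (t : sort) (n : nat) : pat s -> pat s
| PApp (sg : symbol) : pats (sym_arity sg) -> pat (sym_res sg)
| PNew (s : sort) (al : NS) (n : nat) : pat s -> pat s
with pats : list sort -> Type :=
| PNil : pats []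
| PCons (s : sort) (l : list sort) : pat s -> pats l -> pats (s :: l).

Arguments PAnd {s}.
Arguments PNot {s}.
Arguments PEx {s}.
Arguments PNew {s}.
Arguments PCons {s l}.

Definition POr (s : sort) (p q : pat s) : pat s := PNot (PAnd (PNot p) (PNot q)).

Fixpoint map_new (al : NS) (n : nat) (l : list sort) (ps : pats l) : pats l :=
  match ps in pats l return pats l with
  | PNil => PNil
  | PCons p ps => PCons (PNew al n p) (map_new al n _ ps)
  end.

Fixpoint name_free (al : NS) (n : nat) (s : sort) (p : pat s) : Prop :=
  match p with
  | PVar _ _ => False
  | PName be m => be = al /\ m = n
  | PAnd p q => name_free al n _ p \/ name_free al n _ q
  | PNot p => name_free al n _ p
  | PEx _ _ p => name_free al n _ p
  | PApp _ ps => names_free al n _ ps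
  | PNew be m p => ~ (be = al /\ m = n) /\ name_free al n _ p
  end
with names_free (al : NS) (n : nat) (l : list sort) (ps : pats l) : Prop :=
  match ps with
  | PNil => False
  | PCons p ps => name_free al n _ p \/ names_free al n _ ps
  end.

Fixpoint var_free (t : sort) (n : nat) (s : sort) (p : pat s) : Prop :=
  match p with
  | PVar u m => u = t /\ m = n
  | PName _ _ => False
  | PAnd p q => var_free t n _ p \/ var_free t n _ q
  | PNot p => var_free t n _ p
  | PEx u m p => ~ (u = t /\ m = n) /\ var_free t n _ p
  | PApp _ ps => vars_free t n _ ps
  | PNew _ _ p => var_free t n _ p
  end
with vars_free (t : sort) (n : nat) (l : list sort) (ps : pats l) : Prop :=
  match ps with
  | PNil => False
  | PCons p ps => var_free t n _ p \/ vars_free t n _ ps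
  end.

Section Semantics.
Context (Mo : std_model).
Let B := base Mo.

Record env := {
  evar : forall s : sort, nat -> option (M B s);
  ename : NS -> nat -> option atom }.

Definition wf_env (e : env) : Prop :=
  (exists L : list (sort * nat), forall s n, evar e s n <> None -> In (s, n) L) /\
  (exists L : list (NS * nat), forall al n, ename e al n <> None -> In (al, n) L) /\
  (forall al n a, ename e al n = Some a -> asort a = al) /\
  (forall s n v, evar e s n = Some v -> exists L, supports (mact B s) L v) /\
  (forall al be n m a, ename e al n = Some a -> ename e be m = Some a ->
                       al = be /\ n = m).

Definition in_env_supp (e : env) (a : atom) : Prop :=
  (exists al n, ename e al n = Some a) \/
  (exists s n v, evar e s n = Some v /\ in_supp (mact B s) a v).

Definition upd_var (e : env) (t : sort) (n : nat) (v : M B t) : env :=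
  {| evar := fun s m =>
       match excluded_middle_informative (t = s) with
       | left E => if Nat.eqb n m then Some (eq_rect t (M B) v s E) else evar e s m
       | right _ => evar e s m
       end;
     ename := ename e |}.

Definition upd_name (e : env) (al : NS) (n : nat) (a : atom) : env :=
  {| evar := evar e;
     ename := fun be m => if dec (be = al /\ m = n) then Some a else ename e be m |}.

Fixpoint sem (s : sort) (p : pat s) (e : env) {struct p} : M B s -> Prop :=
  match p in pat s return M B s -> Prop with
  | PVar s n => fun v => evar e s n = Some v
  | PName al n => fun v => ename e al n = Some (proj1_sig v)
  | PAnd p q => fun v => sem _ p e v /\ sem _ q e v
  | PNot p => fun v => ~ sem _ p e v
  | PEx t n p => fun v => exists u : M B t, sem _ p (upd_var e t n u) v
  | PApp sg ps => fun w => exists vs, sems _ ps e vs /\ sym_int Mo sg vs w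
  | @PNew s al n p => fun v =>
      exists a : atom, asort a = al /\ ~ in_env_supp e a /\
        sem _ p (upd_name e al n a) v /\ ~ in_supp (mact B s) a v
  end
with sems (l : list sort) (ps : pats l) (e : env) {struct ps} : tup B l -> Prop :=
  match ps in pats l return tup B l -> Prop with
  | PNil => fun _ => True
  | PCons p ps => fun vs => sem _ p e (fst vs) /\ sems _ ps e (snd vs)
  end.

Definition suitable (e : env) (s : sort) (p : pat s) : Prop :=
  (forall t n, var_free t n _ p -> evar e t n <> None) /\
  (forall al n, name_free al n _ p -> ename e al n <> None).

Definition pequiv (s : sort) (p q : pat s) : Prop :=
  forall e : env, wf_env e -> suitable e s p -> suitable e s q ->
    forall v : M B s, sem s p e v <-> sem s q e v.

End Semantics.

Fixpoint tup_fresh (B : BS -> nomset) (a : atom) (l : list sort) : tup B l -> Prop :=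
  match l return tup B l -> Prop with
  | [] => fun _ => True
  | s :: l => fun vs => ~ in_supp (mact B s) a (fst vs) /\ tup_fresh B a l (snd vs)
  end.

End NML.

Arguments SName {NS BS} al.
Arguments SProd {NS BS} t1 t2.
Arguments SymPair {NS BS Sym} t1 t2.
Arguments SymAbs {NS BS Sym} al t.
Arguments PVar {NS BS Sym arity res} s n.
Arguments PName {NS BS Sym arity res} al n.
Arguments PAnd {NS BS Sym arity res s} _ _.
Arguments PNot {NS BS Sym arity res s} _.
Arguments PEx {NS BS Sym arity res s} t n _.
Arguments PApp {NS BS Sym arity res} sg _.
Arguments PNew {NS BS Sym arity res s} al n _.
Arguments PNil {NS BS Sym arity res}.
Arguments PCons {NS BS Sym arity res s l} _ _.
Arguments POr {NS BS Sym arity res s} p q.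
Arguments map_new {NS BS Sym arity res} al n {l} ps.
Arguments name_free {NS BS Sym arity res} al n {s} p.
Arguments pequiv {NS BS Sym arity res} Mo {s} p q.
Arguments sym_int {NS BS Sym arity res} Mo sg _ _.
Arguments base {NS BS Sym arity res} _ _.
Arguments tup_fresh {NS BS} B a {l} _.
Arguments mact {NS BS} B s _ _.
Arguments in_supp {NS T} act a x.
Arguments supports {NS T} act L x.

(* Main.v *)
Require Import Defs.
From Stdlib Require Import List Classical ClassicalEpsilon FunctionalExtensionality PropExtensionality ProofIrrelevance Arith Lia.
Import ListNotations.

Section Dev.
Context {NS : Type}.
Arguments pf {NS}. Arguments pinv {NS}. Arguments pinvK {NS}. Arguments pfK {NS}.
Arguments psort {NS}. Arguments pfinite {NS}. Arguments asort {NS}.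
Arguments pswap {NS}. Arguments cact {NS}. Arguments cT {NS}.
Arguments alpha_class {NS}. Arguments abs_mk {NS}. Arguments abs_act {NS}.
Arguments swapf {NS}.

Definition pinvp (p : perm NS) : perm NS.
Proof.
  refine {| pf := pinv p; pinv := pf p; pinvK := pfK p; pfK := pinvK p; psort := _; pfinite := _ |}.
  - intro a. rewrite <- (psort p (pinv p a)), pfK. reflexivity.
  - destruct (pfinite p) as [L HL]. exists (map (pf p) L). intros a Ha.
    assert (H : pf p (pinv p a) <> pinv p a) by (rewrite pfK; congruence).
    apply HL in H. rewrite <- (pfK p a). apply in_map. exact H.
Defined.

Definition pcomp (p q : perm NS) : perm NS.
Proof.
  refine {| pf := fun a => pf p (pf q a); pinv := fun a => pinv q (pinv p a) |}.
  - intro a. rewrite !pinvK. reflexivity.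
  - intro a. rewrite !pfK. reflexivity.
  - intro a. rewrite !psort. reflexivity.
  - destruct (pfinite p) as [L1 H1]; destruct (pfinite q) as [L2 H2].
    exists (L1 ++ L2). intros a Ha. apply in_or_app.
    destruct (classic (pf q a = a)) as [E|E].
    + left. apply H1. rewrite E in Ha. exact Ha.
    + right. apply H2. exact E.
Defined.

Definition pid : perm NS.
Proof.
  refine {| pf := fun a => a; pinv := fun a => a |}; try reflexivity.
  exists []. intros a H; congruence.
Defined.

Lemma swapf_l (a b : atom NS) : swapf a b a = b.
Proof. unfold swapf. rewrite (dec_true (eq_refl a)). reflexivity. Qed.
Lemma swapf_r (a b : atom NS) : swapf a b b = a.
Proof. unfold swapf. destruct (classic (b = a)) as [E|E].
  - rewrite (dec_true E). congruence.
  - rewrite (dec_false E), (dec_true (eq_refl b)). reflexivity. Qed.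
Lemma swapf_o (a b c : atom NS) : c <> a -> c <> b -> swapf a b c = c.
Proof. intros. unfold swapf. rewrite (dec_false H), (dec_false H0). reflexivity. Qed.

Lemma swapf_conj (p : perm NS) a b d :
  pf p (swapf a b d) = swapf (pf p a) (pf p b) (pf p d).
Proof.
  destruct (classic (d = a)) as [Ea|Ea]; [subst; rewrite !swapf_l; reflexivity|].
  destruct (classic (d = b)) as [Eb|Eb]; [subst; rewrite !swapf_r; reflexivity|].
  rewrite swapf_o by assumption. rewrite swapf_o; auto.
  - intro E. apply Ea. rewrite <- (pinvK p d), E, pinvK. reflexivity.
  - intro E. apply Eb. rewrite <- (pinvK p d), E, pinvK. reflexivity.
Qed.

Lemma in_map_pf (p : perm NS) a L : In (pf p a) (map (pf p) L) <-> In a L.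
Proof.
  split; intro H.
  - apply in_map_iff in H. destruct H as [x [E Hx]].
    rewrite <- (pinvK p x), E, pinvK in Hx. exact Hx.
  - apply in_map. exact H.
Qed.

Definition good (C : carrier NS) :=
  (forall p x, (forall a, pf p a = a) -> cact C p x = x) /\
  (forall p q r x, (forall a, pf r a = pf p (pf q a)) -> cact C r x = cact C p (cact C q x)).

Section Good.
Context (C : carrier NS) (G : good C).

Lemma act_ext p q x : (forall a, pf p a = pf q a) -> cact C p x = cact C q x.
Proof.
  intro H. rewrite ((proj2 G) q pid p x) by (intro; apply H).
  rewrite ((proj1 G) pid x) by reflexivity. reflexivity.
Qed.

Lemma act_invl p x : cact C (pinvp p) (cact C p x) = x.
Proof.
  rewrite <- ((proj2 G) (pinvp p) p pid x) by (intro; simpl; rewrite pinvK; reflexivity).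
  apply (proj1 G). reflexivity.
Qed.

Lemma act_invr p x : cact C p (cact C (pinvp p) x) = x.
Proof.
  rewrite <- ((proj2 G) p (pinvp p) pid x) by (intro; simpl; rewrite pfK; reflexivity).
  apply (proj1 G). reflexivity.
Qed.

Lemma act_inj p x y : cact C p x = cact C p y <-> x = y.
Proof.
  split; intro H; [|subst; reflexivity].
  rewrite <- (act_invl p x), H, act_invl. reflexivity.
Qed.

Lemma supports_eqv p L x :
  supports (cact C) L x -> supports (cact C) (map (pf p) L) (cact C p x).
Proof.
  intros HL r Hr.
  set (r' := pcomp (pinvp p) (pcomp r p)).
  assert (E : cact C r' x = x).
  { apply HL. intros l Hl. simpl. rewrite Hr by (apply in_map; exact Hl). apply pinvK. }
  rewrite <- ((proj2 G) r p (pcomp r p) x) by reflexivity.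
  rewrite <- E at 2.
  rewrite <- ((proj2 G) p r' (pcomp r p) x).
  - reflexivity.
  - intro a. simpl. rewrite pfK. reflexivity.
Qed.

Lemma in_supp_eqv p a x :
  in_supp (cact C) (pf p a) (cact C p x) <-> in_supp (cact C) a x.
Proof.
  split; intro H.
  - intros L HL. apply (supports_eqv p) in HL. apply H in HL.
    apply in_map_pf in HL. exact HL.
  - intros L HL. apply (supports_eqv (pinvp p)) in HL.
    rewrite act_invl in HL. apply H in HL.
    apply in_map_iff in HL. destruct HL as [l [E Hl]]. simpl in E.
    rewrite <- E, pfK. exact Hl.
Qed.

Lemma supports_fix p L x :
  supports (cact C) L x -> cact C p x = x -> supports (cact C) (map (pf p) L) x.
Proof. intros H E. pose proof (supports_eqv p L x H). rewrite E in H0. exact H0. Qed.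

Lemma not_in_supp a x : ~ in_supp (cact C) a x -> exists L, supports (cact C) L x /\ ~ In a L.
Proof.
  intro H. apply not_all_ex_not in H. destruct H as [L H].
  exists L. split; [apply NNPP; intro; apply H; intro; contradiction | intro; apply H; intro; assumption].
Qed.

End Good.

Lemma fresh_atom (al : NS) (L : list (atom NS)) : exists c, asort c = al /\ ~ In c L.
Proof.
  assert (exists k, forall x, In x L -> snd x < k) as [k Hk].
  { induction L as [|x L [k IH]].
    - exists 0. intros x [].
    - exists (S (max k (snd x))). intros y [E|Hy].
      + subst. lia.
      + specialize (IH y Hy). lia. }
  exists (al, k). split; [reflexivity|]. intro H. apply Hk in H. simpl in H. lia.
Qed.

Lemma swap_fix (C : carrier NS) (G : good C) a b (H : asort a = asort b) x :
  ~ in_supp (cact C) a x -> ~ in_supp (cact C) b x -> cact C (pswap a b H) x = x.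
Proof.
  intros Ha Hb.
  destruct (classic (a = b)) as [E|E].
  - subst. apply (proj1 G). intro d. simpl.
    destruct (classic (d = b)); [subst; apply swapf_l| apply swapf_o; auto].
  - destruct (not_in_supp C a x Ha) as [L1 [S1 N1]].
    destruct (not_in_supp C b x Hb) as [L2 [S2 N2]].
    destruct (fresh_atom (asort a) (a :: b :: L1 ++ L2)) as [c [Hc Nc]].
    assert (Hac : asort a = asort c) by congruence.
    assert (Hbc : asort b = asort c) by congruence.
    assert (ca : c <> a) by (intro; apply Nc; left; auto).
    assert (cb : c <> b) by (intro; apply Nc; right; left; auto).
    assert (cL1 : ~ In c L1) by (intro; apply Nc; right; right; apply in_or_app; auto).
    assert (cL2 : ~ In c L2) by (intro; apply Nc; right; right; apply in_or_app; auto).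
    assert (F1 : cact C (pswap a c Hac) x = x).
    { apply S1. intros l Hl. simpl. apply swapf_o; intro; subst; contradiction. }
    assert (F2 : cact C (pswap b c Hbc) x = x).
    { apply S2. intros l Hl. simpl. apply swapf_o; intro; subst; contradiction. }
    rewrite ((proj2 G) (pswap a c Hac) (pcomp (pswap b c Hbc) (pswap a c Hac))).
    + rewrite ((proj2 G) (pswap b c Hbc) (pswap a c Hac) (pcomp (pswap b c Hbc) (pswap a c Hac))) by reflexivity.
      rewrite F1, F2, F1. reflexivity.
    + intro d. simpl.
      destruct (classic (d = a)) as [Da|Da]; [subst|].
      { rewrite swapf_l, swapf_l, swapf_r, swapf_o; auto. }
      destruct (classic (d = b)) as [Db|Db]; [subst|].
      { rewrite (swapf_o a c b), (swapf_l b c), (swapf_r a c), (swapf_r a b) by auto; reflexivity. }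
      destruct (classic (d = c)) as [Dc|Dc]; [subst|].
      { rewrite (swapf_r a c), (swapf_o b c a), (swapf_l a c), (swapf_o a b c) by auto; reflexivity. }
      rewrite (swapf_o a c d), (swapf_o b c d), (swapf_o a c d), (swapf_o a b d) by auto; reflexivity.
Qed.


Section Abs.
Context (C : carrier NS) (G : good C).

Lemma class_eqv p a x :
  alpha_class C (pf p a) (cact C p x) =
  fun bz => alpha_class C a x (pinv p (fst bz), cact C (pinvp p) (snd bz)).
Proof.
  apply functional_extensionality; intros [b z]; apply propositional_extensionality.
  unfold alpha_class; simpl. split.
  - intros [[E1 E2] | [Hs [Hn Ez]]].
    + left. subst. rewrite pinvK, act_invl by exact G. auto.
    + right.
      assert (Hs' : asort (pinv p b) = asort a)
        by (rewrite <- (psort p (pinv p b)), pfK, Hs, psort; reflexivity).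
      exists Hs'. split.
      * intro I. apply Hn. rewrite <- (pfK p b). apply (in_supp_eqv C G); exact I.
      * rewrite Ez.
        rewrite <- ((proj2 G) (pswap b (pf p a) Hs) p (pcomp (pswap b (pf p a) Hs) p)) by reflexivity.
        rewrite <- ((proj2 G) (pinvp p) (pcomp (pswap b (pf p a) Hs) p) (pcomp (pinvp p) (pcomp (pswap b (pf p a) Hs) p))) by reflexivity.
        apply (act_ext C G). intro d; simpl.
        pose proof (swapf_conj (pinvp p) b (pf p a) (pf p d)) as HH; simpl in HH.
        rewrite !pinvK in HH; exact HH.
  - intros [[E1 E2] | [Hs [Hn Ez]]].
    + left. rewrite <- E1, pfK. rewrite <- E2, act_invr by exact G. auto.
    + right.
      assert (Hs' : asort b = asort (pf p a))
        by (rewrite psort, <- Hs, <- (psort p (pinv p b)), pfK; reflexivity).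
      exists Hs'. split.
      * intro I. apply Hn. rewrite <- (pfK p b) in I. apply (in_supp_eqv C G) in I; exact I.
      * apply (act_inj C G (pinvp p)). rewrite Ez.
        rewrite <- ((proj2 G) (pswap b (pf p a) Hs') p (pcomp (pswap b (pf p a) Hs') p)) by reflexivity.
        rewrite <- ((proj2 G) (pinvp p) (pcomp (pswap b (pf p a) Hs') p) (pcomp (pinvp p) (pcomp (pswap b (pf p a) Hs') p))) by reflexivity.
        apply (act_ext C G). intro d; simpl.
        pose proof (swapf_conj (pinvp p) b (pf p a) (pf p d)) as HH; simpl in HH.
        rewrite !pinvK in HH; symmetry; exact HH.
Qed.

Lemma abs_mk_eq al a Ha x a' Ha' x' :
  alpha_class C a x = alpha_class C a' x' -> abs_mk al C a Ha x = abs_mk al C a' Ha' x'.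
Proof. intro E. unfold abs_mk. apply subset_eq_compat. exact E. Qed.

Lemma abs_cases al (S : absT NS al C) : exists a Ha x, S = abs_mk al C a Ha x.
Proof.
  destruct S as [P H]. destruct H as [a [x [Ha E]]]. exists a, Ha, x.
  unfold abs_mk. apply subset_eq_compat. exact E.
Qed.

Lemma abs_act_mk al p a Ha x H' :
  abs_act al C p (abs_mk al C a Ha x) = abs_mk al C (pf p a) H' (cact C p x).
Proof.
  unfold abs_act.
  destruct (constructive_indefinite_description _ _) as [a' Ha'].
  destruct (constructive_indefinite_description _ _) as [x' [Hs Heq]].
  simpl in Heq. apply abs_mk_eq. rewrite !class_eqv, Heq. reflexivity.
Qed.

End Abs.

Section Carr.
Context {BS : Type} (B : BS -> nomset NS).

Lemma cact_abs al s p (S : absT NS al (carr NS BS B s)) :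
  cact (carr NS BS B (SAbs NS BS al s)) p S = abs_act al (carr NS BS B s) p S.
Proof. reflexivity. Qed.

Lemma good_carr s : good (carr NS BS B s).
Proof.
  induction s as [al|b| |al s IH|s1 IH1 s2 IH2].
  - split; intros; destruct x as [a Ha]; simpl; unfold name_act; simpl;
      apply subset_eq_compat; simpl; auto.
  - split; intros; simpl; [apply nact_id | apply nact_comp]; auto.
  - split; intros; reflexivity.
  - split.
    + intros p S Hp. destruct (abs_cases (carr NS BS B s) al S) as [a [Ha [x ->]]]. rewrite ?cact_abs.
      rewrite (abs_act_mk _ IH al p a Ha x (eq_trans (psort p a) Ha)).
      apply abs_mk_eq. rewrite Hp, ((proj1 IH) p x Hp). reflexivity.
    + intros p q r S Hr. destruct (abs_cases (carr NS BS B s) al S) as [a [Ha [x ->]]]. rewrite ?cact_abs.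
      rewrite (abs_act_mk _ IH al r a Ha x (eq_trans (psort r a) Ha)).
      rewrite (abs_act_mk _ IH al q a Ha x (eq_trans (psort q a) Ha)).
      rewrite (abs_act_mk _ IH al p _ _ _ (eq_trans (psort p _) (eq_trans (psort q a) Ha))).
      apply abs_mk_eq. rewrite Hr, ((proj2 IH) p q r x Hr). reflexivity.
  - split.
    + intros p [x y] Hp. simpl. rewrite (proj1 IH1), (proj1 IH2); auto.
    + intros p q r [x y] Hr. simpl. rewrite ((proj2 IH1) p q r), ((proj2 IH2) p q r); auto.
Qed.

Lemma fs_carr s : forall x : cT (carr NS BS B s), exists L, supports (cact (carr NS BS B s)) L x.
Proof.
  induction s as [al|b| |al s IH|s1 IH1 s2 IH2]; intro x.
  - destruct x as [a Ha]. exists [a]. intros p Hp. simpl. unfold name_act. simpl.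
    apply subset_eq_compat. apply Hp. left; auto.
  - apply nfin.
  - exists []. intros p Hp; reflexivity.
  - destruct (abs_cases (carr NS BS B s) al x) as [a [Ha [y ->]]]. destruct (IH y) as [L HL].
    exists (a :: L). intros p Hp. rewrite cact_abs.
    rewrite (abs_act_mk _ (good_carr s) al p a Ha y (eq_trans (psort p a) Ha)).
    apply abs_mk_eq. rewrite (Hp a (or_introl eq_refl)), (HL p (fun l Hl => Hp l (or_intror Hl))).
    reflexivity.
  - destruct x as [x y]. destruct (IH1 x) as [L1 H1]. destruct (IH2 y) as [L2 H2].
    exists (L1 ++ L2). intros p Hp. simpl.
    rewrite H1, H2; auto; intros; apply Hp; apply in_or_app; auto.
Qed.

End Carr.


Lemma swap_comm (C : carrier NS) (G : good C) p a b H H' x :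
  cact C (pswap (pf p a) (pf p b) H') (cact C p x) = cact C p (cact C (pswap a b H) x).
Proof.
  rewrite <- ((proj2 G) (pswap (pf p a) (pf p b) H') p (pcomp (pswap (pf p a) (pf p b) H') p)) by reflexivity.
  rewrite <- ((proj2 G) p (pswap a b H) (pcomp p (pswap a b H))) by reflexivity.
  apply (act_ext C G). intro d; simpl. symmetry; apply swapf_conj.
Qed.

Section Sem.
Context {BS Sym : Type} {arity : Sym -> list (sort NS BS)} {res : Sym -> sort NS BS}
  (Mo : std_model NS BS Sym arity res).
Notation B := (base Mo).

Lemma minj s p (x y : M NS BS B s) : mact B s p x = mact B s p y <-> x = y.
Proof. apply (act_inj (carr NS BS B s) (good_carr B s)). Qed.

Lemma sym_eqv sg p vs w :
  sym_int Mo sg (tact NS BS B _ p vs) (mact B _ p w) <-> sym_int Mo sg vs w.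
Proof.
  destruct sg as [f|t1 t2|al t|al t|al t|al t].
  - apply usym_equiv.
  - destruct vs as [x [y u]]. destruct w as [w1 w2]. cbn [sym_int tact fst snd].
    change ((mact B t1 p w1, mact B t2 p w2) = (mact B t1 p x, mact B t2 p y) <-> (w1, w2) = (x, y)).
    split; intro E; injection E; intros E2 E1.
    + apply minj in E1; apply minj in E2. subst; reflexivity.
    + subst; reflexivity.
  - destruct vs as [a [x u]]. cbn [sym_int tact fst snd].
    change (abs_act al (carr NS BS B t) p w = abs_mk al (carr NS BS B t) (pf p (proj1_sig a)) (eq_trans (psort p _) (proj2_sig a)) (mact B t p x) <-> w = abs_mk al (carr NS BS B t) (proj1_sig a) (proj2_sig a) x).
    rewrite <- (abs_act_mk _ (good_carr B t) al p (proj1_sig a) (proj2_sig a) x).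
    apply (act_inj (carr NS BS B (SAbs NS BS al t)) (good_carr B _) p).
  - destruct vs as [a [b [x u]]]. cbn [sym_int tact fst snd].
    unfold sort_eq2.
    change (mact B t p w = cact (carr NS BS B t) (pswap (pf p (proj1_sig a)) (pf p (proj1_sig b)) (eq_trans (proj2_sig (mact B (SName al) p a)) (eq_sym (proj2_sig (mact B (SName al) p b))))) (cact (carr NS BS B t) p x) <-> w = mact B t (pswap (proj1_sig a) (proj1_sig b) (eq_trans (proj2_sig a) (eq_sym (proj2_sig b)))) x).
    rewrite (swap_comm _ (good_carr B t) p _ _ (eq_trans (proj2_sig a) (eq_sym (proj2_sig b)))).
    apply minj.
  - destruct vs as [S [a u]]. cbn [sym_int tact fst snd].
    destruct (abs_cases (carr NS BS B t) al S) as [a0 [Ha0 [x0 ->]]].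
    change (proj1_sig (abs_act al (carr NS BS B t) p (abs_mk al (carr NS BS B t) a0 Ha0 x0)) (pf p (proj1_sig a), cact (carr NS BS B t) p w) <-> proj1_sig (abs_mk al (carr NS BS B t) a0 Ha0 x0) (proj1_sig a, w)).
    rewrite (abs_act_mk _ (good_carr B t) al p a0 Ha0 x0 (eq_trans (psort p a0) Ha0)).
    unfold abs_mk; simpl proj1_sig.
    rewrite (class_eqv _ (good_carr B t)). simpl. rewrite pinvK, (act_invl _ (good_carr B t)).
    reflexivity.
  - destruct vs as [a [x u]]. cbn [sym_int tact fst snd].
    change (~ in_supp (cact (carr NS BS B t)) (pf p (proj1_sig a)) (cact (carr NS BS B t) p x) <-> ~ in_supp (cact (carr NS BS B t)) (proj1_sig a) x).
    rewrite (in_supp_eqv _ (good_carr B t)). reflexivity.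
Qed.

End Sem.

Section Sem2.
Context {BS Sym : Type} {arity : Sym -> list (sort NS BS)} {res : Sym -> sort NS BS}
  (Mo : std_model NS BS Sym arity res).
Notation B := (base Mo).
Notation semM := (sem NS BS Sym arity res Mo).
Notation semsM := (sems NS BS Sym arity res Mo).
Notation envM := (env NS BS Sym arity res Mo).
Notation enameM := (ename NS BS Sym arity res Mo).
Notation evarM := (evar NS BS Sym arity res Mo).
Notation upd_nameM := (upd_name NS BS Sym arity res Mo).
Notation upd_varM := (upd_var NS BS Sym arity res Mo).
Notation in_envM := (in_env_supp NS BS Sym arity res Mo).

Definition Rel (p : perm NS) (e e' : envM) : Prop :=
  (forall al n, enameM e' al n = option_map (pf p) (enameM e al n)) /\
  (forall s n, evarM e' s n = option_map (mact B s p) (evarM e s n)).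

Lemma Rel_inv p e e' : Rel p e e' -> Rel (pinvp p) e' e.
Proof.
  intros [R1 R2]. split.
  - intros al n. rewrite R1. destruct (enameM e al n); simpl; [rewrite pinvK|]; reflexivity.
  - intros s n. rewrite R2. destruct (evarM e s n); simpl; [|reflexivity].
    unfold mact. rewrite (act_invl _ (good_carr B s)). reflexivity.
Qed.

Lemma Rel_upd_name p e e' al n a :
  Rel p e e' -> Rel p (upd_nameM e al n a) (upd_nameM e' al n (pf p a)).
Proof.
  intros [R1 R2]. split.
  - intros be m. unfold upd_name; simpl. destruct (dec _); [reflexivity | apply R1].
  - intros s m. apply R2.
Qed.

Lemma Rel_upd_var p e e' t n u :
  Rel p e e' -> Rel p (upd_varM e t n u) (upd_varM e' t n (mact B t p u)).
Proof.
  intros [R1 R2]. split.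
  - intros be m. apply R1.
  - intros s m. unfold upd_var; simpl.
    destruct (excluded_middle_informative (t = s)) as [E|E]; [destruct E; destruct (Nat.eqb n m); [reflexivity|apply R2] | apply R2].
Qed.

Lemma not_in_env_eqv p e e' a :
  Rel p e e' -> ~ in_envM e a -> ~ in_envM e' (pf p a).
Proof.
  intros [R1 R2] N [[al [n Hn]] | [s [n [v [Hv Hs]]]]]; apply N.
  - rewrite R1 in Hn. destruct (enameM e al n) as [c|] eqn:E; simpl in Hn; [|discriminate].
    injection Hn as Hn. left; exists al, n. rewrite E. f_equal.
    rewrite <- (pinvK p c), Hn, pinvK. reflexivity.
  - rewrite R2 in Hv. destruct (evarM e s n) as [u|] eqn:E; simpl in Hv; [|discriminate].
    injection Hv as Hv. subst v. right. exists s, n, u. split; auto.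
    unfold mact in Hs. apply (in_supp_eqv _ (good_carr B s)) in Hs. exact Hs.
Qed.

Scheme pat_ind2 := Induction for pat Sort Prop with pats_ind2 := Induction for pats Sort Prop.
Combined Scheme pat_mut from pat_ind2, pats_ind2.

Lemma sem_eqv_all :
  (forall s (q : pat NS BS Sym arity res s) p e e' v, Rel p e e' -> semM s q e v -> semM s q e' (mact B s p v)) /\
  (forall l (ps : pats NS BS Sym arity res l) p e e' vs, Rel p e e' -> semsM l ps e vs -> semsM l ps e' (tact NS BS B l p vs)).
Proof.
  apply (pat_mut NS BS Sym arity res
    (fun s q => forall p e e' v, Rel p e e' -> semM s q e v -> semM s q e' (mact B s p v))
    (fun l ps => forall p e e' vs, Rel p e e' -> semsM l ps e vs -> semsM l ps e' (tact NS BS B l p vs))).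
  all: clear.
  - intros s n p e e' v R H. simpl in *. rewrite (proj2 R), H. reflexivity.
  - intros al n p e e' v R H. simpl in *. rewrite (proj1 R), H. reflexivity.
  - intros s q1 IH1 q2 IH2 p e e' v R [H1 H2]. split; eauto.
  - intros s q IH p e e' v R H H'. apply H.
    pose proof (IH (pinvp p) e' e _ (Rel_inv _ _ _ R) H') as HH.
    unfold mact in HH. rewrite (act_invl _ (good_carr B s)) in HH. exact HH.
  - intros s t n q IH p e e' v R [u H]. exists (mact B t p u).
    apply (IH p (upd_varM e t n u)); [apply Rel_upd_var; exact R | exact H].
  - intros sg ps IH p e e' v R [vs [H1 H2]]. exists (tact NS BS B _ p vs). split.
    + eapply IH; eauto.
    + apply sym_eqv. exact H2.
  - intros s al n q IH p e e' v R [a [Ha [N [H Hs]]]]. exists (pf p a). split; [rewrite psort; exact Ha|].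
    split; [eapply not_in_env_eqv; eauto|]. split.
    + apply (IH p (upd_nameM e al n a)); [apply Rel_upd_name; exact R | exact H].
    + unfold mact. rewrite (in_supp_eqv _ (good_carr B s)). exact Hs.
  - intros; simpl; auto.
  - intros s l q IH ps IHs p e e' vs R [H1 H2]. destruct vs as [v vs]. split; simpl; eauto.
Qed.


Lemma some_any s (q : pat NS BS Sym arity res s) e al n a b v :
  asort a = al -> asort b = al -> ~ in_envM e a -> ~ in_envM e b ->
  ~ in_supp (mact B s) a v -> ~ in_supp (mact B s) b v ->
  semM s q (upd_nameM e al n a) v -> semM s q (upd_nameM e al n b) v.
Proof.
  intros Ha Hb Na Nb Sa Sb Hq.
  assert (H : asort a = asort b) by congruence.
  assert (R : Rel (pswap a b H) (upd_nameM e al n a) (upd_nameM e al n b)).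
  { split.
    - intros be m. unfold upd_name; simpl. destruct (dec _).
      + simpl. rewrite swapf_l; reflexivity.
      + destruct (enameM e be m) as [c|] eqn:E; simpl; [|reflexivity].
        rewrite swapf_o; [reflexivity| |]; intro; subst; [apply Na | apply Nb]; left; exists be, m; exact E.
    - intros s' m. simpl. destruct (evarM e s' m) as [u|] eqn:E; simpl; [|reflexivity].
      f_equal. symmetry. unfold mact. apply (swap_fix _ (good_carr B s')); intro I;
        [apply Na|apply Nb]; right; exists s', m, u; split; auto. }
  pose proof (proj1 sem_eqv_all _ q _ _ _ v R Hq) as HH.
  unfold mact in HH. rewrite (swap_fix _ (good_carr B s)) in HH; assumption.
Qed.

Definition FinS (e : envM) := exists L, forall c, in_envM e c -> In c L.

Lemma wf_FinS e : wf_env NS BS Sym arity res Mo e -> FinS e.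
Proof.
  intros [[LV HV] [[LN HN] _]].
  assert (exists L1, forall al n c, In (al,n) LN -> enameM e al n = Some c -> In c L1) as [L1 H1].
  { clear HN. induction LN as [|[al0 n0] K [L1 IH]].
    - exists []. intros ? ? ? [].
    - destruct (enameM e al0 n0) as [c0|] eqn:E0.
      + exists (c0 :: L1). intros al n c [Eq|Hin] Hc.
        * injection Eq; intros; subst. rewrite E0 in Hc; injection Hc; intros; subst; left; auto.
        * right; eauto.
      + exists L1. intros al n c [Eq|Hin] Hc.
        * injection Eq; intros; subst. rewrite E0 in Hc; discriminate.
        * eauto. }
  assert (exists L2, forall s n u, In (s,n) LV -> evarM e s n = Some u ->
            forall c, in_supp (mact B s) c u -> In c L2) as [L2 H2].
  { clear HV. induction LV as [|[s0 n0] K [L2 IH]].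
    - exists []. intros ? ? ? [].
    - destruct (evarM e s0 n0) as [u0|] eqn:E0.
      + destruct (fs_carr B s0 u0) as [Lu HLu].
        exists (Lu ++ L2). intros s n u [Eq|Hin] Hu c Hc.
        * injection Eq; intros; subst. rewrite E0 in Hu; injection Hu; intros; subst.
          apply in_or_app; left. apply Hc. exact HLu.
        * apply in_or_app; right; eauto.
      + exists L2. intros s n u [Eq|Hin] Hu c Hc.
        * injection Eq; intros; subst. rewrite E0 in Hu; discriminate.
        * eauto. }
  exists (L1 ++ L2). intros c [[al [n Hn]] | [s [n [v [Hv Hs]]]]]; apply in_or_app.
  - left. apply (H1 al n c); auto. apply HN. congruence.
  - right. apply (H2 s n v); auto. apply HV. congruence.
Qed.

Lemma FinS_upd_name e al n a : FinS e -> FinS (upd_nameM e al n a).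
Proof.
  intros [L HL]. exists (a :: L).
  intros c [[be [m Hm]] | [s [m [v [Hv Hs]]]]].
  - unfold upd_name in Hm; simpl in Hm. destruct (dec _).
    + injection Hm; intros; subst; left; auto.
    + right; apply HL; left; exists be, m; exact Hm.
  - right; apply HL; right; exists s, m, v; auto.
Qed.

Lemma FinS_upd_var e t n u : FinS e -> FinS (upd_varM e t n u).
Proof.
  intros [L HL]. destruct (fs_carr B t u) as [Lu HLu]. exists (Lu ++ L).
  intros c [[be [m Hm]] | [s [m [v [Hv Hs]]]]].
  - apply in_or_app; right; apply HL; left; exists be, m; exact Hm.
  - unfold upd_var in Hv; simpl in Hv.
    destruct (excluded_middle_informative (t = s)) as [E|E].
    + destruct E. destruct (Nat.eqb n m).
      * injection Hv; intros; subst v. apply in_or_app; left. apply Hs. exact HLu.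
      * apply in_or_app; right; apply HL; right; exists t, m, v; auto.
    + apply in_or_app; right; apply HL; right; exists s, m, v; auto.
Qed.

Lemma supp_notin s L (v : M NS BS B s) c :
  supports (mact B s) L v -> ~ In c L -> ~ in_supp (mact B s) c v.
Proof. intros H N I. apply N, I, H. Qed.

Lemma exists_fresh e (L0 : list (atom NS)) al : FinS e ->
  exists c, asort c = al /\ ~ in_envM e c /\ ~ In c L0.
Proof.
  intros [L HL]. destruct (fresh_atom al (L ++ L0)) as [c [Hc N]].
  exists c. split; [exact Hc|]. split; intro I; apply N; apply in_or_app; [left; apply HL; exact I | right; exact I].
Qed.

Definition agree s (q : pat NS BS Sym arity res s) (e e' : envM) :=
  (forall t n, var_free NS BS Sym arity res t n s q -> evarM e t n = evarM e' t n) /\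
  (forall al n, name_free al n q -> enameM e al n = enameM e' al n).
Definition agrees l (ps : pats NS BS Sym arity res l) (e e' : envM) :=
  (forall t n, vars_free NS BS Sym arity res t n l ps -> evarM e t n = evarM e' t n) /\
  (forall al n, names_free NS BS Sym arity res al n l ps -> enameM e al n = enameM e' al n).

Lemma coinc_all :
  (forall s q e e' v, FinS e -> FinS e' -> agree s q e e' -> semM s q e v -> semM s q e' v) /\
  (forall l ps e e' vs, FinS e -> FinS e' -> agrees l ps e e' -> semsM l ps e vs -> semsM l ps e' vs).
Proof.
  apply (pat_mut NS BS Sym arity res
    (fun s q => forall e e' v, FinS e -> FinS e' -> agree s q e e' -> semM s q e v -> semM s q e' v)
    (fun l ps => forall e e' vs, FinS e -> FinS e' -> agrees l ps e e' -> semsM l ps e vs -> semsM l ps e' vs)).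
  - intros s n e e' v F F' A H. simpl in *. rewrite <- (proj1 A s n (conj eq_refl eq_refl)). exact H.
  - intros al n e e' v F F' A H. simpl in *. rewrite <- (proj2 A al n (conj eq_refl eq_refl)). exact H.
  - intros s q1 IH1 q2 IH2 e e' v F F' A [H1 H2]. split.
    + apply (IH1 e e' v F F'); [split; intros; apply A; simpl; auto|exact H1].
    + apply (IH2 e e' v F F'); [split; intros; apply A; simpl; auto|exact H2].
  - intros s q IH e e' v F F' A H H'. apply H. apply (IH e' e v F' F); [|exact H'].
    split; intros; symmetry; apply A; simpl; auto.
  - intros s t n q IH e e' v F F' A [u H]. exists u.
    apply (IH (upd_varM e t n u)); [apply FinS_upd_var; auto | apply FinS_upd_var; auto | | exact H].
    split.
    + intros t' n' Hf. unfold upd_var; simpl.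
      destruct (excluded_middle_informative (t = t')) as [E|E].
      * destruct (Nat.eqb n n') eqn:En; [reflexivity|].
        apply (proj1 A). simpl. split; [|exact Hf]. intros [E1 E2]. apply Nat.eqb_neq in En. auto.
      * apply (proj1 A). simpl. split; [|exact Hf]. intros [E1 E2]. auto.
    + intros al m Hf. simpl. apply (proj2 A). simpl. exact Hf.
  - intros sg ps IH e e' v F F' A [vs [H1 H2]]. exists vs. split; [|exact H2].
    apply (IH e e' vs F F'); [|exact H1]. exact A.
  - intros s be m q IH e e' v F F' A [a [Ha [N [H Hs]]]].
    destruct F as [L HL]. destruct F' as [L' HL']. destruct (fs_carr B s v) as [Lv HLv].
    destruct (fresh_atom be (L ++ L' ++ Lv)) as [c [Hc Nc]].
    assert (N1 : ~ in_envM e c) by (intro I; apply Nc; apply in_or_app; left; apply HL; exact I).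
    assert (N2 : ~ in_envM e' c) by (intro I; apply Nc; apply in_or_app; right; apply in_or_app; left; apply HL'; exact I).
    assert (N3 : ~ in_supp (mact B s) c v).
    { apply (supp_notin s Lv); [exact HLv|]. intro I; apply Nc; apply in_or_app; right; apply in_or_app; right; exact I. }
    pose proof (some_any s q e be m a c v Ha Hc N N1 Hs N3 H) as H'.
    exists c. split; [exact Hc|]. split; [exact N2|]. split; [|exact N3].
    apply (IH (upd_nameM e be m c)); [apply FinS_upd_name; exists L; exact HL | apply FinS_upd_name; exists L'; exact HL' | | exact H'].
    split.
    + intros t n Hf. simpl. apply (proj1 A). simpl. exact Hf.
    + intros al n Hf. unfold upd_name; simpl.
      destruct (classic (al = be /\ n = m)) as [P|P]; [rewrite (dec_true P); reflexivity|].
      rewrite (dec_false P). apply (proj2 A). simpl. split; [|exact Hf].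
      intros [E1 E2]. apply P. auto.
  - intros; simpl; auto.
  - intros s l q IH ps IHs e e' vs F F' A [H1 H2]. split.
    + apply (IH e e' _ F F'); [split; intros; apply A; simpl; auto|exact H1].
    + apply (IHs e e' _ F F'); [split; intros; apply A; simpl; auto|exact H2].
Qed.


Lemma agree_upd s (q : pat NS BS Sym arity res s) e al n a :
  ~ name_free al n q -> agree s q e (upd_nameM e al n a) /\ agree s q (upd_nameM e al n a) e.
Proof.
  intro NF. split; split; intros.
  - reflexivity.
  - unfold upd_name; simpl. destruct (classic (al0 = al /\ n0 = n)) as [[E1 E2]|P]; [subst; contradiction|].
    rewrite (dec_false P); reflexivity.
  - reflexivity.
  - unfold upd_name; simpl. destruct (classic (al0 = al /\ n0 = n)) as [[E1 E2]|P]; [subst; contradiction|].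
    rewrite (dec_false P); reflexivity.
Qed.

Lemma claim1a al n s (p q : pat NS BS Sym arity res s) :
  pequiv Mo (PAnd (PNew al n p) (PNew al n q)) (PNew al n (PAnd p q)).
Proof.
  intros e W _ _ v. simpl. split.
  - intros [[a [Ha [Na [Hp Sa]]]] [b [Hb [Nb [Hq Sb]]]]]. exists a. repeat split; auto.
    apply (some_any s q e al n b a v); auto.
  - intros [a [Ha [Na [[Hp Hq] Sa]]]]. split; exists a; auto.
Qed.

Lemma claim1b al n s (p q : pat NS BS Sym arity res s) :
  ~ name_free al n q -> pequiv Mo (PNew al n (PAnd p q)) (PAnd (PNew al n p) q).
Proof.
  intros NF e W _ _ v. pose proof (wf_FinS e W) as F. simpl. split.
  - intros [a [Ha [Na [[Hp Hq] Sa]]]]. split; [exists a; auto|].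
    apply (proj1 coinc_all s q (upd_nameM e al n a) e v); auto; try (apply FinS_upd_name; auto); try (apply agree_upd; auto).
  - intros [[a [Ha [Na [Hp Sa]]]] Hq]. exists a. repeat split; auto.
    apply (proj1 coinc_all s q e (upd_nameM e al n a) v); auto; try (apply FinS_upd_name; auto); try (apply agree_upd; auto).
Qed.

Lemma claim1c al n s (p q : pat NS BS Sym arity res s) :
  pequiv Mo (POr (PNew al n p) (PNew al n q)) (PNew al n (POr p q)).
Proof.
  intros e W _ _ v. unfold POr.
  change (~ (~ semM s (PNew al n p) e v /\ ~ semM s (PNew al n q) e v) <->
          semM s (PNew al n (PNot (PAnd (PNot p) (PNot q)))) e v).
  split.
  - intro H. destruct (classic (semM s (PNew al n p) e v)) as [Hp|Hp].
    + destruct Hp as [a [Ha [Na [Hp Sa]]]]. exists a. repeat split; auto.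
      simpl. intros [N1 N2]; auto.
    + destruct (classic (semM s (PNew al n q) e v)) as [Hq|Hq].
      * destruct Hq as [a [Ha [Na [Hq Sa]]]]. exists a. repeat split; auto.
        simpl. intros [N1 N2]; auto.
      * exfalso; auto.
  - intros [a [Ha [Na [H Sa]]]] [N1 N2]. simpl in H.
    destruct (classic (semM s p (upd_nameM e al n a) v)) as [P|P].
    + apply N1; exists a; auto.
    + apply N2; exists a; repeat split; auto. apply NNPP; intro Q; apply H; split; auto.
Qed.

Lemma claim2 al n s (p : pat NS BS Sym arity res s) :
  pequiv Mo (PNot (PNew al n p)) (PNew al n (PNot p)).
Proof.
  intros e W _ _ v.
  change (~ semM s (PNew al n p) e v <-> semM s (PNew al n (PNot p)) e v). split.
  - intro N. destruct (fs_carr B s v) as [Lv HLv].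
    destruct (exists_fresh e Lv al (wf_FinS e W)) as [c [Hc [Nc Ic]]].
    exists c. split; auto. split; auto. split.
    + simpl. intro Hp. apply N. exists c. repeat split; auto; try (apply (supp_notin s Lv); auto).
    + apply (supp_notin s Lv); auto.
  - intros [a [Ha [Na [Hn Sa]]]] [b [Hb [Nb [Hp Sb]]]]. apply Hn.
    apply (some_any s p e al n b a v); auto.
Qed.

Lemma abs_fresh1 al t (a : atom NS) (Ha : asort a = al) (x : M NS BS B t) b :
  b <> a -> ~ in_supp (mact B t) b x ->
  ~ in_supp (mact B (SAbs NS BS al t)) b (abs_mk al (carr NS BS B t) a Ha x).
Proof.
  intros Hba Hx. destruct (not_in_supp _ b x Hx) as [L [HL N]].
  apply (supp_notin (SAbs NS BS al t) (a :: L)).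
  - intros p Hp. unfold mact. rewrite cact_abs.
    rewrite (abs_act_mk _ (good_carr B t) al p a Ha x (eq_trans (psort p a) Ha)).
    apply abs_mk_eq. rewrite (Hp a (or_introl eq_refl)), (HL p (fun l Hl => Hp l (or_intror Hl))).
    reflexivity.
  - intros [E|I]; auto.
Qed.

Lemma abs_fresh2 al t (a : atom NS) (Ha : asort a = al) (x : M NS BS B t) b :
  b <> a -> ~ in_supp (mact B (SAbs NS BS al t)) b (abs_mk al (carr NS BS B t) a Ha x) ->
  ~ in_supp (mact B t) b x.
Proof.
  intros Hba H. destruct (not_in_supp _ _ _ H) as [L [HL N]].
  destruct (fs_carr B t x) as [Lx HLx].
  destruct (fresh_atom (asort b) (a :: b :: L ++ Lx)) as [d [Hd Nd]].
  assert (Hbd : asort b = asort d) by congruence.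
  assert (da : d <> a) by (intro; apply Nd; left; auto).
  assert (db : d <> b) by (intro; apply Nd; right; left; auto).
  assert (dL : ~ In d L) by (intro; apply Nd; right; right; apply in_or_app; auto).
  assert (dLx : ~ In d Lx) by (intro; apply Nd; right; right; apply in_or_app; auto).
  assert (F : cact (carr NS BS B (SAbs NS BS al t)) (pswap b d Hbd) (abs_mk al (carr NS BS B t) a Ha x)
              = abs_mk al (carr NS BS B t) a Ha x).
  { apply HL. intros l Hl. simpl. apply swapf_o; intro; subst; contradiction. }
  rewrite cact_abs in F.
  rewrite (abs_act_mk _ (good_carr B t) al _ a Ha x (eq_trans (psort (pswap b d Hbd) a) Ha)) in F.
  apply (f_equal (@proj1_sig _ _)) in F. unfold abs_mk in F; simpl proj1_sig in F.
  simpl pf in F. rewrite (swapf_o b d a) in F by auto.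
  assert (Fx : cact (carr NS BS B t) (pswap b d Hbd) x = x).
  { pose proof (equal_f F (a, cact (carr NS BS B t) (pswap b d Hbd) x)) as G.
    unfold alpha_class in G; simpl in G.
    assert (G2 : (a = a /\ cact (carr NS BS B t) (pswap b d Hbd) x = x) \/
       (exists H0 : asort a = asort a, ~ in_supp (cact (carr NS BS B t)) a x /\
          cact (carr NS BS B t) (pswap b d Hbd) x = cact (carr NS BS B t) (pswap a a H0) x)).
    { rewrite <- G. left; auto. }
    destruct G2 as [[_ E] | [H0 [_ E]]]; [exact E|].
    rewrite E. apply (proj1 (good_carr B t)). intro c. simpl.
    destruct (classic (c = a)); [subst; apply swapf_l | apply swapf_o; auto]. }
  pose proof (supports_fix _ (good_carr B t) (pswap b d Hbd) Lx x HLx Fx) as S.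
  apply (supp_notin t _ x b S).
  intro I. apply dLx. apply (in_map_pf (pswap b d Hbd)). simpl. rewrite swapf_r. exact I.
Qed.

Lemma claim3 al n m t (p : pat NS BS Sym arity res t) : n <> m ->
  pequiv Mo (PApp (SymAbs al t) (PCons (PName al n) (PCons (PNew al m p) PNil)))
    (PNew al m (PApp (SymAbs al t) (PCons (PName al n) (PCons p PNil)))).
Proof.
  intros Hnm e W _ _ w. simpl.
  assert (D : ~ (al = al /\ n = m)) by (intros [_ E]; auto). rewrite (dec_false D).
  split.
  - intros [[c [x u]] [[Hc [[a [Ha [Na [Hp Sa]]]] _]] Ew]]. simpl in *. exists a. split; auto. split; auto. split.
    + exists (c, (x, u)). simpl. repeat split; auto.
    + subst w. apply abs_fresh1; auto. intro E; apply Na; left; exists al, n; rewrite Hc, E; reflexivity.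
  - intros [a [Ha [Na [[[c [x u]] [[Hc [Hp _]] Ew]] Sa]]]]. simpl in *. exists (c,(x,u)). simpl.
    split; [|exact Ew]. split; [exact Hc|]. split; [|exact I]. exists a. repeat split; auto.
    subst w. apply (abs_fresh2 al t (proj1_sig c) (proj2_sig c)); auto.
    intro E; apply Na; left; exists al, n; rewrite Hc, E; reflexivity.
Qed.


Lemma tup_fs l (vs : tup NS BS B l) : exists L, forall c, ~ In c L -> tup_fresh B c vs.
Proof.
  induction l as [|s l IH].
  - exists []. intros; exact I.
  - destruct vs as [v vs]. destruct (fs_carr B s v) as [L1 H1]. destruct (IH vs) as [L2 H2].
    exists (L1 ++ L2). intros c N. simpl. split.
    + apply (supp_notin s L1); auto. intro; apply N; apply in_or_app; auto.
    + apply H2. intro; apply N; apply in_or_app; auto.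
Qed.

Lemma claim4a al n t1 t2 (p : pat NS BS Sym arity res t1) (q : pat NS BS Sym arity res t2) :
  ~ name_free al n q ->
  pequiv Mo (PApp (SymPair t1 t2) (PCons (PNew al n p) (PCons q PNil)))
    (PNew al n (PApp (SymPair t1 t2) (PCons p (PCons q PNil)))).
Proof.
  intros NF e W _ _ w. pose proof (wf_FinS e W) as F. simpl. split.
  - intros [[x [y u]] [[[a [Ha [Na [Hp Sa]]]] [Hq _]] Ew]]. simpl in *. subst w.
    destruct (fs_carr B t1 x) as [Lx HLx]. destruct (fs_carr B t2 y) as [Ly HLy].
    destruct (exists_fresh e (Lx ++ Ly) al F) as [c [Hc [Nc Ic]]].
    exists c. split; auto. split; auto. split.
    + exists (x,(y,u)). simpl. split; [|reflexivity]. split.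
      * apply (some_any t1 p e al n a c x); auto.
        apply (supp_notin t1 Lx); auto. intro; apply Ic; apply in_or_app; auto.
      * split; [|exact I].
        apply (proj1 coinc_all t2 q e (upd_nameM e al n c) y); auto;
          try (apply FinS_upd_name; auto); try (apply agree_upd; auto).
    + apply (supp_notin (SProd t1 t2) (Lx ++ Ly)); auto.
      intros r Hr. change ((mact B t1 r x, mact B t2 r y) = (x,y)).
      unfold mact. rewrite HLx, HLy; auto; intros; apply Hr; apply in_or_app; auto.
  - intros [a [Ha [Na [[[x [y u]] [[Hp [Hq _]] Ew]] Sa]]]]. simpl in *. subst w.
    exists (x,(y,u)). simpl. split; [|reflexivity]. split.
    + exists a. split; auto. split; auto. split; auto.
      destruct (not_in_supp _ _ _ Sa) as [L [HL N]].
      apply (supp_notin t1 L); auto. intros r Hr. pose proof (HL r Hr) as E.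
      change ((mact B t1 r x, mact B t2 r y) = (x,y)) in E. injection E; auto.
    + split; [|exact I].
      apply (proj1 coinc_all t2 q (upd_nameM e al n a) e y); auto;
        try (apply FinS_upd_name; auto); try (apply agree_upd; auto).
Qed.

Lemma map1 al n l (ps : pats NS BS Sym arity res l) : forall e vs a,
  asort a = al -> ~ in_envM e a -> tup_fresh B a vs ->
  semsM l ps (upd_nameM e al n a) vs -> semsM l (map_new al n ps) e vs.
Proof.
  induction ps as [|s l p ps IH]; intros e vs a Ha Na T H; simpl in *; auto.
  destruct vs as [v vs]. destruct H as [H1 H2]. destruct T as [T1 T2]. simpl in *.
  split; [exists a; auto | eapply IH; eauto].
Qed.

Lemma map2 al n l (ps : pats NS BS Sym arity res l) : forall e vs a,
  asort a = al -> ~ in_envM e a -> tup_fresh B a vs ->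
  semsM l (map_new al n ps) e vs -> semsM l ps (upd_nameM e al n a) vs.
Proof.
  induction ps as [|s l p ps IH]; intros e vs a Ha Na T H; simpl in *; auto.
  destruct vs as [v vs]. destruct H as [H1 H2]. destruct T as [T1 T2]. simpl in *.
  split; [|eapply IH; eauto].
  destruct H1 as [b [Hb [Nb [Hp Sb]]]].
  apply (some_any s p e al n b a v); auto.
Qed.

Lemma claim4b sg :
  (forall (vs : tup NS BS B (sym_arity NS BS Sym arity sg)) (w : M NS BS B (sym_res NS BS Sym res sg)) a,
     sym_int Mo sg vs w -> ~ in_supp (mact B (sym_res NS BS Sym res sg)) a w -> tup_fresh B a vs) ->
  forall al n (ps : pats NS BS Sym arity res (sym_arity NS BS Sym arity sg)),
    pequiv Mo (PApp sg (map_new al n ps)) (PNew al n (PApp sg ps)).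
Proof.
  intros Hsg al n ps e W _ _ w. pose proof (wf_FinS e W) as F. simpl. split.
  - intros [vs [Hs Hi]]. destruct (tup_fs _ vs) as [Lt HLt].
    destruct (fs_carr B _ w) as [Lw HLw].
    destruct (exists_fresh e (Lt ++ Lw) al F) as [c [Hc [Nc Ic]]].
    exists c. split; auto. split; auto. split.
    + exists vs. split; [|exact Hi]. apply (map2 al n _ ps e vs c); auto.
      apply HLt. intro; apply Ic; apply in_or_app; auto.
    + apply (supp_notin _ Lw); auto. intro; apply Ic; apply in_or_app; auto.
  - intros [a [Ha [Na [[vs [Hs Hi]] Sa]]]]. exists vs. split; [|exact Hi].
    apply (map1 al n _ ps e vs a); auto.
    apply (Hsg vs w a Hi Sa).
Qed.

End Sem2.
End Dev.

Theorem mainTheorem9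
  (NS BS Sym : Type) (arity : Sym -> list (sort NS BS)) (res : Sym -> sort NS BS)
  (Mo : std_model NS BS Sym arity res) :
  (* (1) new distributes over conjunction *)
  (forall (al : NS) (n : nat) (s : sort NS BS) (p q : pat NS BS Sym arity res s),
      pequiv Mo (PAnd (PNew al n p) (PNew al n q)) (PNew al n (PAnd p q))) /\
  (forall (al : NS) (n : nat) (s : sort NS BS) (p q : pat NS BS Sym arity res s),
      ~ name_free al n q ->
      pequiv Mo (PNew al n (PAnd p q)) (PAnd (PNew al n p) q)) /\
  (forall (al : NS) (n : nat) (s : sort NS BS) (p q : pat NS BS Sym arity res s),
      pequiv Mo (POr (PNew al n p) (PNew al n q)) (PNew al n (POr p q))) /\
  (* (2) new commutes with negation *)
  (forall (al : NS) (n : nat) (s : sort NS BS) (p : pat NS BS Sym arity res s),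
      pequiv Mo (PNot (PNew al n p)) (PNew al n (PNot p))) /\
  (* (3) for distinct names a, b : alpha, [a](new b. phi) <=> new b. [a]phi *)
  (forall (al : NS) (n m : nat) (t : sort NS BS) (p : pat NS BS Sym arity res t),
      n <> m ->
      pequiv Mo
        (PApp (SymAbs al t) (PCons (PName al n) (PCons (PNew al m p) PNil)))
        (PNew al m (PApp (SymAbs al t) (PCons (PName al n) (PCons p PNil))))) /\
  (* (4) pairing *)
  (forall (al : NS) (n : nat) (t1 t2 : sort NS BS)
          (p : pat NS BS Sym arity res t1) (q : pat NS BS Sym arity res t2),
      ~ name_free al n q ->
      pequiv Mo
        (PApp (SymPair t1 t2) (PCons (PNew al n p) (PCons q PNil)))
        (PNew al n (PApp (SymPair t1 t2) (PCons p (PCons q PNil))))) /\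
  (* (4) general symbols whose interpretation does not create freshness *)
  (forall (sg : symbol NS BS Sym),
      (forall (vs : tup NS BS (base Mo) (sym_arity NS BS Sym arity sg))
              (w : M NS BS (base Mo) (sym_res NS BS Sym res sg)) (a : atom NS),
          sym_int Mo sg vs w ->
          ~ in_supp (mact (base Mo) (sym_res NS BS Sym res sg)) a w ->
          tup_fresh (base Mo) a vs) ->
      forall (al : NS) (n : nat) (ps : pats NS BS Sym arity res (sym_arity NS BS Sym arity sg)),
        pequiv Mo (PApp sg (map_new al n ps)) (PNew al n (PApp sg ps))).
Proof.
  split. { intros. apply claim1a. }
  split. { intros. apply claim1b; assumption. }
  split. { intros. apply claim1c. }
  split. { intros. apply claim2. }
  split. { intros. apply claim3; assumption. }
  split. { intros. apply claim4a; assumption. }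
  intros sg Hsg. apply claim4b. exact Hsg.
Qed.
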